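(* Let $A$ be a nicely essential subring of a ring $S$. Then: (1) If $A$ is prime (respectively, semiprime), then so is $S$; if $A$ is prime (resp. semiprime) and left Goldie, then $S$ is prime (resp. semiprime) and left Goldie. (2) If $S$ is left Goldie, then so is $A$. (3) If $S$ is prime (respectively, semiprime) and left Goldie, then every strongly nicely essential subring of $S$ is prime (respectively, semiprime) and left Goldie.
   Context: A subring $A$ of a ring $S$ (same identity) is a nicely essential subring if for every finite set $E\subseteq S$ of non-zero elements there exists $a\in A$ with $0\neq ax\in A$ for all $x\in E$. It is a strongly nicely essential subring if moreover for every $x\in S$ there exists a left regular element $c$ of $A$ (i.e. $c\in A$ with $\{a\in A: ac=0\}=0$) such that $cx\in A$. A ring is left Goldie if it has finite left uniform dimension and satisfies the ascending chain condition on left annihilators. *)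

(* Defs.v *)
From HB Require Import structures.
From mathcomp Require Import all_boot all_order all_algebra.
Set Implicit Arguments. Unset Strict Implicit. Unset Printing Implicit Defensive.
Import GRing.Theory.
Local Open Scope ring_scope.

Section RingNotions.
Variable R : nzRingType.

Definition prime_ring : Prop :=
  forall a b : R, (forall r : R, a * r * b = 0) -> a = 0 \/ b = 0.

Definition semiprime_ring : Prop :=
  forall a : R, (forall r : R, a * r * a = 0) -> a = 0.

Definition left_ideal (I : R -> Prop) : Prop :=
  [/\ I 0, (forall x y, I x -> I y -> I (x + y)) & (forall r x, I x -> I (r * x))].

Definition nonzero_set (I : R -> Prop) : Prop := exists x, I x /\ x <> 0.

Definition independent_family (I : nat -> R -> Prop) : Prop :=
  forall (n : nat) (x : nat -> R),
    (forall i, (i < n)%N -> I i (x i)) ->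
    \sum_(i < n) x i = 0 -> forall i, (i < n)%N -> x i = 0.

Definition finite_left_udim : Prop :=
  ~ exists I : nat -> R -> Prop,
      (forall n, left_ideal (I n)) /\ (forall n, nonzero_set (I n)) /\
      independent_family I.

Definition lann (X : R -> Prop) : R -> Prop :=
  fun r => forall x, X x -> r * x = 0.

Definition acc_left_annihilators : Prop :=
  forall X : nat -> R -> Prop,
    (forall n r, lann (X n) r -> lann (X n.+1) r) ->
    exists N, forall m, (N <= m)%N -> forall r, lann (X m) r <-> lann (X N) r.

Definition left_goldie : Prop := finite_left_udim /\ acc_left_annihilators.

End RingNotions.

(* A subring A of S (same identity) is given by an injective unital ring
   morphism f : A -> S, identifying A with its image. *)
Definition nicely_essential (A S : nzRingType) (f : {rmorphism A -> S}) : Prop :=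
  injective f /\
  forall E : seq S, (forall x, x \in E -> x != 0) ->
    exists a : A, forall x, x \in E -> f a * x != 0 /\ exists b : A, f a * x = f b.

Definition left_regular (A : nzRingType) (c : A) : Prop :=
  forall a : A, a * c = 0 -> a = 0.

Definition strongly_nicely_essential (A S : nzRingType) (f : {rmorphism A -> S}) : Prop :=
  nicely_essential f /\
  forall x : S, exists c : A, left_regular c /\ exists b : A, f c * x = f b.

(* Main.v *)
Require Import Defs.
From mathcomp Require Import all_boot all_order all_algebra.
From Stdlib Require Import Classical ClassicalEpsilon.
Set Implicit Arguments. Unset Strict Implicit. Unset Printing Implicit Defensive.
Import GRing.Theory.
Local Open Scope ring_scope.

Lemma choice_fun (X T : Type) (P : X -> T -> Prop) :
  (forall a, exists t, P a t) -> exists g, forall a, P a (g a).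
Proof.
move=> H; exists (fun i => proj1_sig (constructive_indefinite_description _ (H i))).
move=> i; exact: proj2_sig (constructive_indefinite_description _ (H i)).
Qed.

Definition ess (R : nzRingType) (L : R -> Prop) :=
  forall y : R, y <> 0 -> exists r, r * y <> 0 /\ L (r * y).

Definition PP (R : nzRingType) := forall t : R, ess (fun r => r * t = 0) -> t = 0.

Lemma lann_single (R : nzRingType) (c r : R) : lann (fun x => x = c) r <-> r * c = 0.
Proof. by split => [h|h x ->]; [apply: h|]. Qed.

Lemma acc_max (R : nzRingType) (P : R -> Prop) b : acc_left_annihilators R -> P b ->
  exists c, P c /\ forall c', P c' -> (forall r, r * c = 0 -> r * c' = 0) ->
     forall r, r * c' = 0 -> r * c = 0.
Proof.
move=> hacc Pb; apply: NNPP => hno.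
have step : forall c : {x | P x}, exists c' : {x | P x},
   (forall r, r * sval c = 0 -> r * sval c' = 0) /\ exists r, r * sval c' = 0 /\ r * sval c <> 0.
  move=> [c Pc]; apply: NNPP => h; apply: hno; exists c; split => // c' Pc' sub r rc'.
  apply: NNPP => rc; apply: h; exists (exist _ c' Pc'); split => //; by exists r.
have [nx hnx] := choice_fun step.
pose sq n := iter n nx (exist _ b Pb).
pose X n := fun x : R => x = sval (sq n).
have mono : forall n r, lann (X n) r -> lann (X n.+1) r.
  move=> n r /lann_single h; apply/lann_single.
  by have [h1 _] := hnx (sq n); apply: h1.
have [N HN] := hacc X mono.
have [_ [r [r1 r2]]] := hnx (sq N).
apply: r2; apply/(lann_single (sval (sq N)) r).
by apply/(HN N.+1 (leqnSn N) r)/lann_single.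
Qed.

Lemma essW (R : nzRingType) (L L' : R -> Prop) : (forall x, L x -> L' x) -> ess L -> ess L'.
Proof. move=> h e y /e [r [r1 r2]]; exists r; split=> //; exact: h. Qed.

Lemma nilp_of_ess (R : nzRingType) (x : R) : acc_left_annihilators R ->
  ess (fun r => r * x = 0) -> exists N, x ^+ N = 0.
Proof.
move=> hacc e.
pose X n := fun y : R => y = x ^+ n.
have mono : forall n r, lann (X n) r -> lann (X n.+1) r.
  by move=> n r /lann_single h; apply/lann_single; rewrite exprSr mulrA h mul0r.
have [N HN] := hacc X mono; exists N; apply: NNPP => hN.
have [t [t1 t2]] := e _ hN.
apply: t1; apply/(lann_single (x ^+ N) t); apply/(HN N.+1 (leqnSn N) t)/lann_single.
by rewrite exprSr mulrA.
Qed.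

Lemma lemmaG (R : nzRingType) : semiprime_ring R -> acc_left_annihilators R -> PP R.
Proof.
move=> hsp hacc b eb; apply: NNPP => b0.
pose F := fun c : R => c <> 0 /\ ess (fun r => r * c = 0).
have [c [[c0 ec] cmax]] := acc_max hacc (conj b0 eb : F b).
apply c0; apply: hsp => r.
pose x := c * r.
have ex : ess (fun t => t * x = 0).
  by apply: essW ec => t; rewrite /x mulrA => ->; rewrite mul0r.
have [N xN] := nilp_of_ess hacc ex.
have key : forall j, (c * r) ^+ j * c = c * (r * c) ^+ j.
  elim=> [|j IH]; first by rewrite !expr0 mul1r mulr1.
  by rewrite exprS -mulrA IH exprS !mulrA.
apply: NNPP => xc.
suff : forall j, x ^+ j * c <> 0 by move/(_ N); rewrite xN mul0r.
elim=> [|j IH]; first by rewrite expr0 mul1r.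
have sub : forall t, t * c = 0 -> t * (x ^+ j * c) = 0.
  by move=> t tc; rewrite /x key mulrA tc mul0r.
have Fj : F (x ^+ j * c) by split; [exact: IH | exact: essW sub ec].
move=> h; apply: xc; have := cmax _ Fj sub x.
rewrite mulrA -exprS h => /(_ erefl).
by rewrite /x -mulrA.
Qed.


Lemma lann_ideal (R : nzRingType) (X : R -> Prop) : left_ideal (lann X).
Proof.
split.
- by move=> x _; rewrite mul0r.
- by move=> a b ha hb x Xx; rewrite mulrDl ha // hb // addr0.
- by move=> r a ha x Xx; rewrite -mulrA ha // mulr0.
Qed.

Lemma ideal_sum (R : nzRingType) (L : R -> Prop) n (x : nat -> R) :
  left_ideal L -> (forall i, (i < n)%N -> L (x i)) -> L (\sum_(i < n) x i).
Proof.
move=> [L0 LD LM] hx; elim/big_ind: _ => //.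
by move=> i _; apply: hx.
Qed.

Lemma ideal_opp (R : nzRingType) (L : R -> Prop) x : left_ideal L -> L x -> L (- x).
Proof. by move=> [_ _ LM] h; rewrite -mulN1r; apply: LM. Qed.

Lemma acc_of_udim_P (R : nzRingType) :
  finite_left_udim R -> PP R -> acc_left_annihilators R.
Proof.
move=> hud hP X mono.
pose L n := lann (X n).
have LI : forall n, left_ideal (L n) by move=> n; exact: lann_ideal.
have monoG : forall n m, (n <= m)%N -> forall r, L n r -> L m r.
  move=> n m /subnK <-; elim: (m - n)%N => [|k IH] r h; first by rewrite add0n.
  by rewrite addSn; apply: mono; apply: IH.
apply: NNPP => hno.
have hstep : forall N, exists m, (N <= m)%N /\ exists r, L m r /\ ~ L N r.
  move=> N; apply: NNPP => h; apply: hno; exists N => m Nm r; split; last exact: monoG.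
  move=> Lm; apply: NNPP => LN; apply: h; exists m; split => //; by exists r.
have hsep : forall N m, (exists r, L m r /\ ~ L N r) ->
    exists u, L m u /\ u <> 0 /\ forall r, L N (r * u) -> r * u = 0.
  move=> N m [z [Lz nLz]]; apply: NNPP => hn.
  have [y [Xy zy]] : exists y, X N y /\ z * y <> 0.
    apply: NNPP => h; apply: nLz => y Xy; apply: NNPP => zy; apply: h; by exists y.
  apply: zy; apply: hP => w w0.
  case: (classic (w * z = 0)) => wz.
    exists 1; rewrite mul1r; split => //; by rewrite mulrA wz mul0r.
  have [r [Lr rwz]] : exists r, L N (r * (w * z)) /\ r * (w * z) <> 0.
    apply: NNPP => h; apply: hn; exists (w * z); split; first by case: (LI m) => _ _; apply.
    split => // r Lr; apply: NNPP => rz; apply: h; by exists r.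
  exists r; split; first by move=> rw; apply: rwz; rewrite mulrA rw mul0r.
  have -> : r * w * (z * y) = r * (w * z) * y by rewrite !mulrA.
  exact: Lr.
have hg : forall N, exists p : nat * R, (N <= p.1)%N /\ L p.1 p.2 /\ p.2 <> 0 /\
     forall r, L N (r * p.2) -> r * p.2 = 0.
  move=> N; have [m [Nm hm]] := hstep N; have [u hu] := hsep N m hm.
  by exists (m, u).
have [g hgg] := choice_fun hg.
pose ns i := iter i (fun n => (g n).1) 0%N.
pose u i := (g (ns i)).2.
have nsS : forall i, ns i.+1 = (g (ns i)).1 by [].
have nsmono : forall i j, (i <= j)%N -> (ns i <= ns j)%N.
  move=> i j /subnK <-; elim: (j - i)%N => [|k IH]; first by rewrite add0n.
  rewrite addSn nsS; apply: leq_trans IH _; by case: (hgg (ns (k + i)%N)).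
have uL : forall i, L (ns i.+1) (u i) by move=> i; rewrite nsS; case: (hgg (ns i)) => _ [].
have u0 : forall i, u i <> 0 by move=> i; case: (hgg (ns i)) => _ [_ []].
have usep : forall i r, L (ns i) (r * u i) -> r * u i = 0.
  by move=> i; case: (hgg (ns i)) => _ [_ [_]].
apply: hud; exists (fun i y => exists r, y = r * u i); split; last split.
- move=> i; split.
  + by exists 0; rewrite mul0r.
  + by move=> a b [r1 ->] [r2 ->]; exists (r1 + r2); rewrite mulrDl.
  + by move=> s a [r1 ->]; exists (s * r1); rewrite mulrA.
- by move=> i; exists (u i); split; [exists 1; rewrite mul1r | exact: u0].
- elim=> [|n IH] x hx hs i hi; first by [].
  move: hs; rewrite big_ord_recr /= => hs.
  have xn : x n = 0.
    have [r xr] := hx n (ltnSn n).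
    have Ls : L (ns n) (\sum_(i < n) x i).
      apply: ideal_sum => // k kn; have [rk ->] := hx k (ltnW kn).
      apply: (monoG (ns k.+1)); first exact: nsmono.
      by case: (LI (ns k.+1)) => _ _; apply; apply: uL.
    rewrite xr; apply: usep; rewrite -xr.
    have -> : x n = - \sum_(i < n) x i by apply/eqP; rewrite -addr_eq0 addrC hs.
    exact: (ideal_opp (LI _) Ls).
  move: hs; rewrite xn addr0 => hs.
  move: hi; rewrite ltnS leq_eqVlt => /orP [/eqP -> // | iln].
  apply: IH => // k kn; apply: hx; exact: ltnW.
Qed.


Lemma cancel_lemma (R : nzRingType) (H : R -> Prop) (u z : R) :
  finite_left_udim R -> PP R -> left_ideal H -> (forall x, H x -> H (x * u)) ->
  (forall x, x * u = 0 -> x = 0) -> (forall x, H x -> x * u * z = 0) ->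
  forall x, H x -> x * z = 0.
Proof.
move=> hud hP HI Hu lu Huz.
have [H0 HD HM] := HI.
have step1 : forall x, H x -> x <> 0 -> exists r, r * x <> 0 /\ exists h, H h /\ r * x = h * u.
  move=> x Hx x0; apply: NNPP => hn.
  have hn' : forall r h, H h -> r * x = h * u -> r * x = 0.
    move=> r h Hh e; apply: NNPP => rx; apply: hn; exists r; split => //; by exists h.
  have lu' : forall i y, y * u ^+ i = 0 -> y = 0.
    elim=> [|i IH] y; first by rewrite expr0 mulr1.
    by rewrite exprSr mulrA => /lu /IH.
  have Hxu : forall i, H (x * u ^+ i).
    elim=> [|i IH]; first by rewrite expr0 mulr1.
    by rewrite exprSr mulrA; apply: Hu.
  have indep : forall n (r : nat -> R), \sum_(i < n) r i * (x * u ^+ i) = 0 ->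
      forall i, (i < n)%N -> r i * (x * u ^+ i) = 0.
    elim=> [|n IH] r; first by [].
    rewrite big_ord_recl /=.
    pose T := \sum_(i < n) r i.+1 * (x * u ^+ i).
    have eT : \sum_(i < n) r (bump 0 i) * (x * u ^+ bump 0 i) = T * u.
      rewrite /T mulr_suml; apply: eq_bigr => i _.
      by rewrite /bump /= add1n exprSr !mulrA.
    rewrite eT => hs.
    have HT : H T by apply: (@ideal_sum R H n (fun i => r i.+1 * (x * u ^+ i)) HI) => i _; apply: HM.
    have r0 : r 0%N * x = 0.
      apply: (hn' _ (- T)); first exact: ideal_opp.
      by apply/eqP; rewrite mulNr -addr_eq0 -hs expr0 mulr1.
    move: hs; rewrite expr0 mulr1 r0 add0r => /lu hT.
    have := IH (fun i => r i.+1) hT => IH'.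
    case=> [|i] hi; first by rewrite expr0 mulr1.
    by rewrite exprSr !mulrA -(mulrA (r i.+1)) IH' // mul0r.
  apply: hud; exists (fun i y => exists r, y = r * (x * u ^+ i)); split; last split.
  - move=> i; split.
    + by exists 0; rewrite mul0r.
    + by move=> a b [r1 ->] [r2 ->]; exists (r1 + r2); rewrite mulrDl.
    + by move=> s a [r1 ->]; exists (s * r1); rewrite mulrA.
  - move=> i; exists (x * u ^+ i); split; first by exists 1; rewrite mul1r.
    by move/lu'.
  - move=> n y hy hs.
    have hc : forall i, exists r, (i < n)%N -> y i = r * (x * u ^+ i).
      move=> i; case: (ltnP i n) => hi; last by exists 0.
      by have [r ->] := hy i hi; exists r.
    have [r hr] := choice_fun hc.
    move=> i hi; rewrite (hr i hi); apply: indep hi.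
    rewrite -[RHS]hs; apply: eq_bigr => j _; by rewrite (hr j (ltn_ord j)).
move=> x Hx; apply: hP => w w0.
case: (classic (w * x = 0)) => wx.
  by exists 1; rewrite mul1r; split => //; rewrite mulrA wx mul0r.
have [r [rwx [h [Hh e]]]] := step1 _ (HM w x Hx) wx.
exists r; split; first by move=> rw; apply: rwx; rewrite mulrA rw mul0r.
by rewrite mulrA -(mulrA r) e Huz.
Qed.


Section Transfer.
Variables (A S : nzRingType) (f : {rmorphism A -> S}).
Hypothesis hne : nicely_essential f.

Lemma f0 x : f x = 0 -> x = 0.
Proof. by case: hne => finj _ h; apply: finj; rewrite h rmorph0. Qed.

Lemma fne x : x <> 0 -> f x <> 0.
Proof. by move=> h /f0. Qed.

Lemma ne1 x : x <> 0 -> exists a, f a * x <> 0 /\ exists b, f a * x = f b.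
Proof.
move=> x0; case: hne => _ /(_ [:: x]) [].
  by move=> y; rewrite inE => /eqP ->; apply/eqP.
move=> a /(_ x); rewrite inE eqxx => /(_ isT) [/eqP h1 h2]; by exists a.
Qed.

Lemma ne2 x y : x <> 0 -> y <> 0 ->
  exists a, (f a * x <> 0 /\ exists b, f a * x = f b) /\ (f a * y <> 0 /\ exists b, f a * y = f b).
Proof.
move=> x0 y0; case: hne => _ /(_ [:: x; y]) [].
  by move=> z; rewrite !inE => /orP [] /eqP ->; apply/eqP.
move=> a h; exists a; split.
  by have [/eqP ? ?] := h x (mem_head _ _).
have hy : y \in [:: x; y] by rewrite !inE eqxx orbT.
by have [/eqP ? ?] := h y hy.
Qed.

Lemma prime_AS : prime_ring A -> prime_ring S.
Proof.
move=> hp a b hab; apply: NNPP => /not_or_and [a0 b0].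
have [c [cb [b' eb]]] := ne1 b0.
have [d [da [a' ea]]] := ne1 a0.
have : a' = 0 \/ b' = 0.
  apply: hp => r; apply: f0; rewrite !rmorphM -ea -eb.
  have -> : f d * a * f r * (f c * b) = f d * (a * (f r * f c) * b) by rewrite !mulrA.
  by rewrite hab mulr0.
by case=> [e|e]; [apply: da; rewrite ea e rmorph0 | apply: cb; rewrite eb e rmorph0].
Qed.

Lemma semiprime_AS : semiprime_ring A -> semiprime_ring S.
Proof.
move=> hp a haa; apply: NNPP => a0.
have [d [da [a' ea]]] := ne1 a0.
apply: da; rewrite ea; suff -> : a' = 0 by rewrite rmorph0.
apply: hp => r; apply: f0; rewrite !rmorphM -ea.
have -> : f d * a * f r * (f d * a) = f d * (a * (f r * f d) * a) by rewrite !mulrA.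
by rewrite haa mulr0.
Qed.

Lemma udim_AS : finite_left_udim A -> finite_left_udim S.
Proof.
move=> hud [I [II [Inz Iind]]]; apply: hud.
exists (fun n x => I n (f x)); split; last split.
- move=> n; have [I0 ID IM] := II n; split.
  + by rewrite rmorph0.
  + by move=> x y hx hy; rewrite rmorphD; apply: ID.
  + by move=> r x hx; rewrite rmorphM; apply: IM.
- move=> n; have [x [Ix x0]] := Inz n.
  have [a [ax [b eb]]] := ne1 x0.
  exists b; split; last by move=> b0; apply: ax; rewrite eb b0 rmorph0.
  by rewrite -eb; have [_ _ IM] := II n; apply: IM.
- move=> n x hx hs i hi; apply: f0.
  apply: (Iind n (fun i => f (x i))) => //.
  by rewrite -rmorph_sum hs rmorph0.
Qed.

Lemma PP_AS : PP A -> PP S.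
Proof.
move=> hP t et; apply: NNPP => t0.
have [a [at0 [b eb]]] := ne1 t0.
apply: at0; rewrite eb; suff -> : b = 0 by rewrite rmorph0.
apply: hP => y y0.
case: (classic (y * a = 0)) => ya.
  exists 1; rewrite mul1r; split => //; apply: f0.
  by rewrite rmorphM -eb mulrA -rmorphM ya rmorph0 mul0r.
have [s [sya sya0]] := et _ (fne ya).
have s0 : s <> 0 by move=> s0; apply: sya; rewrite s0 mul0r.
have [a' [[_ [c ec]] [h2 _]]] := ne2 s0 sya.
exists c; split.
  move=> cy; apply: h2; rewrite mulrA ec -rmorphM mulrA cy mul0r rmorph0 //.
apply: f0; rewrite !rmorphM -eb -ec.
have -> : f a' * s * f y * (f a * t) = f a' * (s * (f y * f a) * t) by rewrite !mulrA.
by rewrite -rmorphM sya0 mulr0.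
Qed.

Lemma acc_AS : semiprime_ring A -> left_goldie A -> acc_left_annihilators S.
Proof.
move=> hsp [hud hacc]; apply: acc_of_udim_P; first exact: udim_AS.
by apply: PP_AS; apply: lemmaG.
Qed.

End Transfer.


Section Down.
Variables (A S : nzRingType) (f : {rmorphism A -> S}).
Hypothesis hne : nicely_essential f.

Lemma acc_SA : acc_left_annihilators S -> acc_left_annihilators A.
Proof.
move=> hacc X mono.
pose Y n := fun s => exists x, X n x /\ s = f x.
have lY : forall n r, lann (Y n) (f r) <-> lann (X n) r.
  move=> n r; split.
    by move=> h x Xx; apply: (f0 hne); rewrite rmorphM; apply: h; exists x.
  by move=> h s [x [Xx ->]]; rewrite -rmorphM h // rmorph0.
have monoY : forall n r, lann (Y n) r -> lann (Y n.+1) r.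
  move=> n r h s [x' [Xx' ->]]; apply: NNPP => rx.
  have r0 : r <> 0 by move=> r0; apply: rx; rewrite r0 mul0r.
  have [a [[_ [c ec]] [h2 _]]] := ne2 hne r0 rx.
  have Lc : lann (X n) c.
    apply/lY => s2 [x [Xx ->]]; rewrite -ec -mulrA.
    by rewrite (h (f x)) ?mulr0 //; exists x.
  apply: h2; rewrite mulrA ec -rmorphM (mono n c Lc x' Xx') rmorph0 //.
have [N HN] := hacc Y monoY.
by exists N => m Nm r; rewrite -!lY; apply: HN.
Qed.

Definition gen (J : A -> Prop) (x : S) :=
  exists l : seq (S * A), (forall p, p \in l -> J p.2) /\ x = \sum_(p <- l) p.1 * f p.2.

Lemma gen_ideal J : left_ideal (gen J).
Proof.
split.
- by exists [::]; rewrite big_nil.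
- move=> x y [l1 [h1 e1]] [l2 [h2 e2]]; exists (l1 ++ l2); split; last by rewrite big_cat e1 e2.
  by move=> p; rewrite mem_cat => /orP [/h1|/h2].
- move=> r x [l [h e]]; rewrite e; exists [seq (r * p.1, p.2) | p <- l]; split.
    move=> p /mapP [q ql ->] /=; exact: h.
  by rewrite big_map mulr_sumr; apply: eq_bigr => p _; rewrite mulrA.
Qed.

Lemma gen_pull J (HJ : left_ideal J) a l : (forall p, p \in l -> J p.2) ->
  (forall p, p \in l -> exists c, f a * p.1 = f c) ->
  exists b, J b /\ f b = f a * \sum_(p <- l) p.1 * f p.2.
Proof.
have [J0 JD JM] := HJ.
elim: l => [|p l IH] hJ hc.
  by exists 0; rewrite big_nil mulr0 rmorph0.
have [b [Jb eb]] : exists b, J b /\ f b = f a * \sum_(p <- l) p.1 * f p.2.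
  by apply: IH => q ql; [apply: hJ | apply: hc]; rewrite inE ql orbT.
have [c ec] := hc p (mem_head _ _).
exists (c * p.2 + b); split; first by apply: JD => //; apply: JM; apply: hJ; exact: mem_head.
by rewrite big_cons rmorphD rmorphM eb -ec mulrDr !mulrA.
Qed.

Lemma udim_SA : finite_left_udim S -> finite_left_udim A.
Proof.
move=> hud [J [JI [Jnz Jind]]]; apply: hud.
exists (fun n => gen (J n)); split; last split.
- move=> n; exact: gen_ideal.
- move=> n; have [x [Jx x0]] := Jnz n; exists (f x); split; last exact: fne.
  exists [:: (1, x)]; split; last by rewrite big_seq1 mul1r.
  by move=> p; rewrite inE => /eqP ->.
- move=> n x hx hs.
  have hc : forall i, exists l, (i < n)%N ->
      (forall p, p \in l -> J i p.2) /\ x i = \sum_(p <- l) p.1 * f p.2.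
    move=> i; case: (ltnP i n) => hi; last by exists [::].
    by have [l hl] := hx i hi; exists l.
  have [l hl] := choice_fun hc.
  pose E := [seq s <- flatten [seq [seq p.1 | p <- l i] | i <- iota 0 n]
                      ++ [seq x i | i <- iota 0 n] | s != 0].
  have [a ha] : exists a, forall s, s \in E -> f a * s != 0 /\ exists b, f a * s = f b.
    by case: hne => _; apply => s; rewrite mem_filter => /andP [].
  have hp : forall i, (i < n)%N -> forall p, p \in l i -> exists c, f a * p.1 = f c.
    move=> i hi p hpl; case: (eqVneq p.1 0) => [-> | p0].
      by exists 0; rewrite mulr0 rmorph0.
    have : p.1 \in E.
      rewrite mem_filter p0 /= mem_cat; apply/orP; left; apply/flattenP.
      exists [seq q.1 | q <- l i]; last by apply/mapP; exists p.
      by apply/mapP; exists i; rewrite ?mem_iota.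
    by case/ha.
  have hb : forall i, exists b, (i < n)%N -> J i b /\ f b = f a * x i.
    move=> i; case: (ltnP i n) => hi; last by exists 0.
    have [hJ ex] := hl i hi.
    have [b [Jb eb]] := gen_pull (JI i) hJ (hp i hi).
    by exists b; rewrite ex.
  have [b hbb] := choice_fun hb.
  have bz : forall i, (i < n)%N -> b i = 0.
    apply: (Jind n b); first by move=> i hi; case: (hbb i hi).
    apply: (f0 hne); rewrite rmorph_sum.
    rewrite (eq_bigr (fun i : 'I_n => f a * x i)); last by move=> i _; case: (hbb i (ltn_ord i)).
    by rewrite -mulr_sumr hs mulr0.
  move=> i hi; apply: NNPP => xi0.
  have : x i \in E.
    rewrite mem_filter mem_cat; apply/andP; split; first by apply/eqP.
    by apply/orP; right; apply/mapP; exists i; rewrite ?mem_iota.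
  case/ha => /eqP h _; apply: h.
  by case: (hbb i hi) => _ <-; rewrite bz // rmorph0.
Qed.

Lemma goldie_SA : left_goldie S -> left_goldie A.
Proof. by case=> h1 h2; split; [exact: udim_SA | exact: acc_SA]. Qed.

End Down.


Section Strong.
Variables (B S : nzRingType) (g : {rmorphism B -> S}).
Hypothesis hsn : strongly_nicely_essential g.

Let hne : nicely_essential g. Proof. by case: hsn. Qed.

Lemma lreg_S c : left_regular c -> forall x, x * g c = 0 -> x = 0.
Proof.
move=> creg x xc; apply: NNPP => x0.
have [e [ex [h eh]]] := ne1 hne x0.
apply: ex; rewrite eh; suff -> : h = 0 by rewrite rmorph0.
apply: creg; apply: (f0 hne); by rewrite rmorphM -eh -mulrA xc mulr0.
Qed.

Lemma key_B (b : B) (hud : finite_left_udim S) (hP : PP S) (a : B) :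
  (forall y, a * y * b = 0) -> forall s, g a * s * g b = 0.
Proof.
move=> hab s; have [_ /(_ s) [c [creg [d ed]]]] := hsn.
pose H := fun x : S => forall y, x * g y * g b = 0.
rewrite -mulrA; apply: (@cancel_lemma S H (g c) (s * g b) hud hP).
- split.
  + by move=> y; rewrite !mul0r.
  + by move=> x z hx hz y; rewrite !mulrDl hx hz addr0.
  + move=> r x hx y; have := hx y; rewrite -!mulrA => ->; by rewrite mulr0.
- by move=> x hx y; rewrite -(mulrA x) -rmorphM.
- exact: lreg_S.
- by move=> x hx; rewrite mulrA -(mulrA x) ed.
- by move=> y; rewrite -!rmorphM hab rmorph0.
Qed.

Lemma prime_B : prime_ring S -> left_goldie S -> prime_ring B.
Proof.
move=> hp [hud hacc] a b hab.
have hsp : semiprime_ring S by move=> x hx; case: (hp x x hx).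
have hP := lemmaG hsp hacc.
by case: (hp _ _ (key_B hud hP hab)) => /(f0 hne) ?; [left|right].
Qed.

Lemma semiprime_B : semiprime_ring S -> left_goldie S -> semiprime_ring B.
Proof.
move=> hsp [hud hacc] a haa.
have hP := lemmaG hsp hacc.
exact: (f0 hne (hsp _ (key_B hud hP haa))).
Qed.

End Strong.

Theorem mainTheorem4 (A S : nzRingType) (f : {rmorphism A -> S}) :
  nicely_essential f ->
  (* (1) *)
  ((prime_ring A -> prime_ring S) /\
   (semiprime_ring A -> semiprime_ring S) /\
   (prime_ring A /\ left_goldie A -> prime_ring S /\ left_goldie S) /\
   (semiprime_ring A /\ left_goldie A -> semiprime_ring S /\ left_goldie S)) /\
  (* (2) *)
  (left_goldie S -> left_goldie A) /\
  (* (3) *)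
  ((prime_ring S /\ left_goldie S ->
      forall (B : nzRingType) (g : {rmorphism B -> S}),
        strongly_nicely_essential g -> prime_ring B /\ left_goldie B) /\
   (semiprime_ring S /\ left_goldie S ->
      forall (B : nzRingType) (g : {rmorphism B -> S}),
        strongly_nicely_essential g -> semiprime_ring B /\ left_goldie B)).
Proof.
move=> hne.
have p2s : forall R : nzRingType, prime_ring R -> semiprime_ring R.
  by move=> R hp x hx; case: (hp x x hx).
split; [split; [|split; [|split]] | split; [|split]].
- exact: prime_AS hne.
- exact: semiprime_AS hne.
- move=> [hp [hud hacc]]; split; first exact: prime_AS hne hp.
  split; first exact: udim_AS hne hud.
  by apply: (acc_AS hne); [exact: p2s | split].
- move=> [hp [hud hacc]]; split; first exact: semiprime_AS hne hp.
  split; first exact: udim_AS hne hud.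
  by apply: (acc_AS hne); [exact: hp | split].
- exact: goldie_SA hne.
- move=> [hp hg] B g hsn; split; first exact: (prime_B hsn).
  by apply: (goldie_SA (f:=g)) => //; case: hsn.
- move=> [hp hg] B g hsn; split; first exact: (semiprime_B hsn).
  by apply: (goldie_SA (f:=g)) => //; case: hsn.
Qed.
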